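(* Let $\mathbf{V}\in\mathbb{R}^{L\times d}$, let $L=km$ and let $G_1,\dots,G_k$ be a partition of $\{1,\dots,L\}$ into groups of size $m$. Let $M\in\mathbb{R}^{k\times L}$ be given by $M_{g,i}=1/m$ if $i\in G_g$ and $M_{g,i}=0$ otherwise. Put $H=2\mathbf{V}^\top\mathbf{V}$ and $\bar H=2\mathbf{V}^\top M^\top M\mathbf{V}$. Then $\lambda_{\max}(\bar H)\le \lambda_{\max}(H)/m$.
   Context: $\lambda_{\max}$ denotes the largest eigenvalue of a symmetric matrix. *)

(* Defs.v *)
From HB Require Import structures.
From mathcomp Require Import all_boot all_order all_algebra.
From mathcomp Require Import reals.
Set Implicit Arguments. Unset Strict Implicit. Unset Printing Implicit Defensive.
Import Order.TTheory GRing.Theory Num.Theory.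
Local Open Scope ring_scope.

Definition is_lambda_max (R : realType) (n : nat) (A : 'M[R]_n) (l : R) : Prop :=
  eigenvalue A l /\ (forall a : R, eigenvalue A a -> a <= l).

Definition avg_mx (R : realType) (k L m : nat) (G : 'I_k -> {set 'I_L}) : 'M[R]_(k, L) :=
  \matrix_(g < k, i < L) (if i \in G g then (m%:R)^-1 else 0).

(* Main.v *)
Require Import Defs.
From HB Require Import structures.
From mathcomp Require Import all_boot all_order all_algebra.
From mathcomp Require Import reals.
From mathcomp Require Import complex ring lra.
Import Order.TTheory GRing.Theory Num.Theory.
Local Open Scope ring_scope.

Module RayM.
Import Num.Def.
Local Open Scope complex_scope.
Local Open Scope sesquilinear_scope.
Lemma rayleigh_le (R : realType) n (A : 'M[R]_n) (l : R) :
  A^T = A -> (forall a, eigenvalue A a -> a <= l) ->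
  forall x : 'rV[R]_n, (x *m A *m x^T) 0 0 <= l * (x *m x^T) 0 0.
Proof.
move=> symA maxl x.
pose f := real_complex R.
pose AC := map_mx f A.
have realC : forall r : R, conjC (f r) = f r.
  by move=> r; apply: conjc_real.
have ACherm : AC \is hermsymmx.
  apply/is_hermitianmxP; rewrite expr0 scale1r.
  apply/matrixP => i j; rewrite !mxE realC -{1}symA mxE.
  done.
have ACn : AC \is normalmx by apply: hermitian_normalmx.
set P := spectralmx AC; set D := spectral_diag AC.
have Pu : P \is unitarymx by apply: spectral_unitarymx.
have Punit : P \in unitmx by apply: spectral_unit.
have eqAC : AC = P^t* *m diag_mx D *m P.
  by rewrite -invmx_unitary //; apply/orthomx_spectralP.
have Dreal := hermitian_spectral_diag_real ACherm.
have PtP : P^t* *m P = 1%:M by rewrite -invmx_unitary // mulVmx.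
have PPt : P *m P^t* = 1%:M by apply/unitarymxP.
have Dle : forall j, D 0 j <= f l.
  move=> j.
  have Dj : D 0 j = f (complex.Re (D 0 j)).
    by rewrite /f RRe_real //; move/mxOverP: Dreal; apply.
  have eD : eigenvalue AC (D 0 j).
  apply/eigenvalueP; exists (row j P).
    rewrite -row_mul eqAC !mulmxA PPt mul1mx.
    apply/rowP => k; rewrite !mxE (bigD1 j) //= big1 ?addr0; last first.
      by move=> i /negbTE ij; rewrite !mxE eq_sym ij mulr0n mul0r.
    by rewrite !mxE eqxx mulr1n.
  apply/negP => /eqP rj0.
  move: Punit; rewrite -row_free_unit => /row_freeP [Q].
  move/(congr1 (fun X : 'M_n => (row j X) 0 j)).
  by rewrite row_mul rj0 mul0mx !mxE eqxx mulr1n => /eqP; rewrite eq_sym oner_eq0.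
  rewrite Dj lecR; apply: maxl.
  rewrite -(eigenvalue_map f).
  move: eD; rewrite {1}Dj; exact.
pose xC := map_mx f x.
have xCt : xC^t* = xC^T.
  by apply/matrixP => i j; rewrite !mxE realC.
pose w := xC *m P^t*.
have wt : w^t* = P *m xC^t*.
  rewrite /w trmx_mul map_mxM; congr (_ *m _).
  by apply/matrixP => i k; rewrite !mxE; apply: conjCK.
have e1 : f ((x *m A *m x^T) 0 0) = (w *m diag_mx D *m w^t*) 0 0.
  rewrite wt /w -!mulmxA [P^t* *m _]mulmxA [_ *m (P *m _)]mulmxA -eqAC.
  rewrite !mulmxA xCt /xC map_trmx -!map_mxM.
  by rewrite [RHS]mxE.
have e2 : f ((x *m x^T) 0 0) = (w *m w^t*) 0 0.
  rewrite wt /w -mulmxA [P^t* *m _]mulmxA PtP mul1mx xCt /xC map_trmx -map_mxM.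
  by rewrite [RHS]mxE.
rewrite -lecR -/f e1.
have -> : f (l * (x *m x^T) 0 0) = f l * f ((x *m x^T) 0 0) by exact: rmorphM.
rewrite e2.
rewrite [in X in _ <= X]mxE mulr_sumr mxE.
apply: ler_sum => j _.
rewrite mul_mx_diag !mxE.
set a := (\sum_(j0 < n) _ * _).
rewrite mulrAC [in X in _ <= X]mulrC.
apply: ler_wpM2l; first exact: mul_conjC_ge0.
exact: Dle.
Qed.
End RayM.
Lemma group_ineq (R : realType) (L k m : nat) (G : 'I_k -> {set 'I_L})
  (hm : (0 < m)%N)
  (hsize : forall g, #|G g| = m)
  (hdisj : forall g1 g2, g1 != g2 -> [disjoint G g1 & G g2])
  (hcover : \bigcup_(g < k) G g = [set: 'I_L])
  (u : 'rV[R]_L) :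
  (u *m (avg_mx R m G)^T *m avg_mx R m G *m u^T) 0 0 <= (u *m u^T) 0 0 / m%:R.
Proof.
set M := avg_mx R m G.
have mpos : 0 < m%:R :> R by rewrite ltr0n.
have -> : u *m M^T *m M *m u^T = (u *m M^T) *m (u *m M^T)^T.
  by rewrite trmx_mul trmxK !mulmxA.
have vE : forall g, (u *m M^T) 0 g = (m%:R)^-1 * \sum_(i in G g) u 0 i.
  move=> g; rewrite mxE mulr_sumr [RHS]big_mkcond /=; apply: eq_bigr => i _.
  rewrite !mxE; case: (i \in G g); first by rewrite mulrC.
  by rewrite mulr0.
have perg : forall g, m%:R * ((m%:R)^-1 * \sum_(i in G g) u 0 i) ^+ 2
                     <= \sum_(i in G g) u 0 i ^+ 2.
  move=> g; set S := \sum_(i in G g) u 0 i; set a := (m%:R)^-1 * S.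
  have Sa : S = m%:R * a by rewrite /a mulrA mulfV ?mulr1 ?mul1r // gt_eqF.
  have h0 : 0 <= \sum_(i in G g) (u 0 i - a) ^+ 2 by apply: sumr_ge0 => i _; exact: sqr_ge0.
  have e : \sum_(i in G g) (u 0 i - a) ^+ 2
      = \sum_(i in G g) u 0 i ^+ 2 - 2%:R * a * S + a ^+ 2 *+ m.
    rewrite -(hsize g) -sumr_const /S mulr_sumr -sumrB -big_split /=.
    by apply: eq_bigr => i _; rewrite sqrrB mulr_natl -mulr_natr; ring.
  rewrite e Sa in h0.
  rewrite mulr_natl; nra.
have -> : ((u *m M^T) *m (u *m M^T)^T) 0 0
   = \sum_g ((m%:R)^-1 * \sum_(i in G g) u 0 i) ^+ 2.
  by rewrite [LHS]mxE; apply: eq_bigr => g _; rewrite [_^T _ _]mxE vE expr2.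
rewrite [(u *m u^T) 0 0]mxE.
have -> : \sum_j u 0 j * u^T j 0 = \sum_g \sum_(i in G g) u 0 i ^+ 2.
  rewrite -(partition_disjoint_bigcup _ (fun i => u 0 i ^+ 2) hdisj) hcover.
  by apply: eq_big => [i|i _]; rewrite ?in_setT // mxE expr2.
rewrite [X in _ <= X]mulr_suml; apply: ler_sum => g _.
rewrite ler_pdivlMr // mulrC.
exact: perg.
Qed.

Theorem mainTheorem6 (R : realType) (L d k m : nat) (V : 'M[R]_(L, d))
  (G : 'I_k -> {set 'I_L})
  (hL : L = (k * m)%N)
  (hsize : forall g, #|G g| = m)
  (hdisj : forall g1 g2, g1 != g2 -> [disjoint G g1 & G g2])
  (hcover : \bigcup_(g < k) G g = [set: 'I_L])
  (lH lHbar : R)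
  (hH : is_lambda_max (2%:R *: (V^T *m V)) lH)
  (hHbar : is_lambda_max
             (2%:R *: (V^T *m (avg_mx R m G)^T *m avg_mx R m G *m V)) lHbar) :
  lHbar <= lH / m%:R.
Proof.
case: hHbar => /eigenvalueP [x hx xn0] _.
case: hH => _ hmax.
have q2 : forall A : 'M[R]_d,
    (x *m (2%:R *: A) *m x^T) 0 0 = 2%:R * (x *m A *m x^T) 0 0.
  by move=> A; rewrite -scalemxAr -scalemxAl mxE.
have eb := congr1 (fun X => (X *m x^T) 0 0) hx; rewrite /= q2 -scalemxAl [RHS]mxE in eb.
have qpos : 0 < (x *m x^T) 0 0.
  have [i xi] : exists i, x 0 i != 0.
    apply/existsP; apply: contraR xn0 => /existsPn h; apply/eqP/rowP => i.
    by rewrite mxE; move/negPn/eqP: (h i).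
  rewrite mxE (bigD1 i) //=; apply: ltr_wpDr.
    by apply: sumr_ge0 => j _; rewrite [x^T _ _]mxE -expr2 sqr_ge0.
  by rewrite [x^T _ _]mxE -expr2 lt_def sqrf_eq0 xi sqr_ge0.
set M := avg_mx R m G in eb *.
case: (posnP m) => [m0|mpos].
  rewrite m0 invr0 mulr0.
  move: hL; rewrite m0 muln0 => hL; subst L.
  have z : V^T *m M^T = 0 by apply/matrixP => i j; rewrite !mxE big_ord0.
  rewrite z !mul0mx mulmx0 ?mul0mx mxE mulr0 in eb.
  have : lHbar * (x *m x^T) 0 0 = 0 by rewrite -eb.
  by move/eqP; rewrite mulf_eq0 (gt_eqF qpos) orbF => /eqP ->.
pose u := x *m V^T.
have e1 : (x *m (V^T *m M^T *m M *m V) *m x^T) 0 0 = (u *m M^T *m M *m u^T) 0 0.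
  by rewrite /u trmx_mul trmxK !mulmxA.
have e2 : (x *m (V^T *m V) *m x^T) 0 0 = (u *m u^T) 0 0.
  by rewrite /u trmx_mul trmxK !mulmxA.
have sym : (2%:R *: (V^T *m V))^T = 2%:R *: (V^T *m V).
  by rewrite linearZ /= trmx_mul trmxK.
have ray := @RayM.rayleigh_le R d _ lH sym hmax x.
rewrite q2 e2 in ray.
have gi := @group_ineq R L k m G mpos hsize hdisj hcover u.
rewrite -/M in gi.
rewrite e1 in eb.
have mp : 0 < m%:R :> R by rewrite ltr0n.
rewrite -(ler_pM2r qpos) -eb mulrAC ler_pdivlMr //.
rewrite ler_pdivlMr // in gi.
nra.
Qed.
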